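(* Fix $n$ and consider a model $\mathcal M$ with block hyper-$g$ prior (hyperparameter $2<a\le4$) on blocks $X_1,\dots,X_k$ ($X_j$ of size $n\times p_j$, $p=\sum_jp_j$) satisfying the block orthogonality condition. Its Bayes factor against the null (intercept-only) model $\mathcal M_0$ is $$BF(\mathcal M:\mathcal M_0)=\Big(\frac{a-2}{2}\Big)^k\int_{(0,1)^k}\prod_{j=1}^k(1-t_j)^{\frac{a+p_j}{2}-2}\Big(1-\sum_{j=1}^kt_jR_j^2\Big)^{-\frac{n-1}{2}}dt .$$ Then $BF(\mathcal M:\mathcal M_0)\to\infty$ (information consistency) under either of the following conditions: (1) $R^2=\sum_{j=1}^kR_j^2\to1$ and $n>k(a-2)+p+1$; (2) for some $i\in\{1,\dots,k\}$, $R_i^2\to1$ and $n\ge a+p_i-1$.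
   Context: Block hyper-$g$ prior: $y\mid\alpha,\beta,\sigma^2\sim N(\alpha\mathbf 1+X\beta,\sigma^2I)$, $X=(X_1,\dots,X_k)$ of full column rank; $\beta\mid g,\sigma^2\sim N(0,A\sigma^2)$ with $A$ block diagonal with blocks $g_j(X_j^TX_j)^{-1}$; $\pi(\alpha,\sigma^2)\propto1/\sigma^2$; $g_j$ independent with densities $\frac{a-2}{2}(1+g_j)^{-a/2}$. Block orthogonality condition: predictors and response centered, $X_i^TX_j=0$ for $i\neq j$. $R_j^2=y^TP_{X_j}y/y^Ty$ with $P_{X_j}$ the projection onto the column space of $X_j$; under block orthogonality $R^2=\sum_jR_j^2$ is the coefficient of determination. Information consistency means $BF(\mathcal M:\mathcal M_0)\to\infty$ whenever $R^2\to1$ for fixed $n$ (limits in the data). *)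

(* Defs.v *)
From HB Require Import structures.
From mathcomp Require Import all_boot all_order all_algebra.
From mathcomp Require Import all_classical all_reals all_analysis.
Set Implicit Arguments. Unset Strict Implicit. Unset Printing Implicit Defensive.
Import Order.TTheory GRing.Theory Num.Theory numFieldNormedType.Exports.
Local Open Scope classical_set_scope.
Local Open Scope ring_scope.

Fixpoint iter_int01 (R : realType) (k : nat) (F : seq R -> \bar R) : \bar R :=
  match k with
  | 0 => F [::]
  | k'.+1 => (\int[@lebesgue_measure R]_(t in `]0%R, 1%R[)
                 iter_int01 k' (fun s => F (t :: s)))%E
  end.

Definition bf_integrand (R : realType) (n k : nat) (a : R) (p : 'I_k -> nat)
  (r : 'I_k -> R) (t : seq R) : R :=
  (\prod_(j < k) ((1 - nth 0 t j) `^ ((a + (p j)%:R) / 2 - 2)))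
  * ((1 - \sum_(j < k) nth 0 t j * r j) `^ (- (n%:R - 1) / 2)).

(* Bayes factor BF(M : M_0) of the block hyper-g model under block
   orthogonality, as a function of the block coefficients R_j^2 = r j. *)
Definition BF (R : realType) (n k : nat) (a : R) (p : 'I_k -> nat)
  (r : 'I_k -> R) : \bar R :=
  (((a - 2) / 2) ^+ k)%:E * iter_int01 k (fun t => (bf_integrand n a p r t)%:E).

(* Main.v *)
Require Import Defs.
From HB Require Import structures.
From mathcomp Require Import all_boot all_order all_algebra.
From mathcomp Require Import all_classical all_reals all_analysis.
From mathcomp Require Import measurable_realfun ring lra.
Import Order.TTheory GRing.Theory Num.Theory numFieldNormedType.Exports.
Local Open Scope classical_set_scope.
Local Open Scope ring_scope.

Section aux.
Context (R : realType).
Local Open Scope ereal_scope.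

Lemma my_le_integral (D : set R) (f1 f2 : R -> \bar R) :
  (forall x, D x -> 0 <= f1 x) -> (forall x, D x -> f1 x <= f2 x) ->
  \int[@lebesgue_measure R]_(x in D) f1 x <= \int[@lebesgue_measure R]_(x in D) f2 x.
Proof.
move=> f10 f12.
have f20 x : D x -> 0 <= f2 x by move=> Dx; exact: le_trans (f10 _ Dx) (f12 _ Dx).
rewrite !ge0_integralE//; apply: ereal_sup_le => _ [h hf <-]; exists h => //= x.
apply: le_trans (hf x) _; rewrite /patch; case: ifP => // /[1!inE] Dx; exact: f12.
Qed.

Lemma iter_ge0 k (F : seq R -> \bar R) : (forall t, 0 <= F t) -> 0 <= iter_int01 k F.
Proof.
elim: k F => [|k IH] F F0 /=; first exact: F0.
by apply: integral_ge0 => t _; apply: IH.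
Qed.

Lemma iter_mono k (F G : seq R -> \bar R) : (forall t, 0 <= G t) ->
  (forall t, G t <= F t) -> iter_int01 k G <= iter_int01 k F.
Proof.
elim: k F G => [|k IH] F G G0 GF /=; first exact: GF.
apply: my_le_integral => t _; first by apply: iter_ge0.
by apply: IH.
Qed.

Local Open Scope ring_scope.
Definition ind (al be x : R) : R := \1_(`]al, be[%classic : set R) x.

Definition boxsum N k (c : nat -> R) (al be : nat -> nat -> R) (t : seq R) : R :=
  \sum_(l < N) c l * \prod_(j < k) ind (al l j) (be l j) (nth 0 t j).

Lemma ind_ge0 al be x : 0 <= ind al be x.
Proof. by rewrite /ind indicE. Qed.

Lemma int_ind (al be K : R) : 0 <= K -> 0 <= al -> al <= be -> be <= 1 ->
  (\int[@lebesgue_measure R]_(t in `]0%R, 1%R[) (K * ind al be t)%:E = (K * (be - al))%:E)%E.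
Proof.
move=> K0 a0 ab b1.
under eq_integral do rewrite EFinM.
rewrite ge0_integralZl_EFin//; last first.
  by apply/measurable_EFinP; exact: measurable_indic.
  by move=> x _; rewrite lee_fin ind_ge0.
rewrite integral_indic//.
rewrite setIidl; last first.
  move=> x /=; rewrite !in_itv/= => /andP[ax xb].
  by rewrite (le_lt_trans a0 ax) (lt_le_trans xb b1).
transitivity (K%:E * (if (al < be)%R then (be - al)%:E else 0))%E.
  congr (_ * _)%E; have := lebesgue_measure_itv (Interval (BRight al) (BLeft be)).
  by rewrite /= -EFinD lte_fin; apply.
case: ifPn => [ab'|]; first by rewrite -EFinM.
rewrite -leNgt => ba; have -> : be = al by apply/eqP; rewrite eq_le ba ab.
by rewrite subrr mulr0 mule0.
Qed.

Lemma iter_boxsum k : forall N (c : nat -> R) (al be : nat -> nat -> R),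
  (forall l, 0 <= c l) -> (forall l j, 0 <= al l j) -> (forall l j, al l j <= be l j) ->
  (forall l j, be l j <= 1) ->
  iter_int01 k (fun t => (boxsum N k c al be t)%:E) =
  (\sum_(l < N) c l * \prod_(j < k) (be l j - al l j))%:E.
Proof.
elim: k => [|k IH] N c al be c0 a0 ab b1.
  by rewrite /= /boxsum; congr (_%:E); apply: eq_bigr => l _; rewrite !big_ord0.
rewrite /=.
under eq_integral => t _.
  rewrite (_ : (fun s => _) = (fun s => (boxsum N k (fun l => c l * ind (al l 0) (be l 0) t)
     (fun l j => al l j.+1) (fun l j => be l j.+1) s)%:E)); last first.
    apply: funext => s; congr (_%:E); apply: eq_bigr => l _.
    by rewrite big_ord_recl /= mulrA.
  rewrite IH; first last.
  - by move=> *; apply: b1.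
  - by move=> *; apply: ab.
  - by move=> *; apply: a0.
  - by move=> l; apply: mulr_ge0 => //; apply: ind_ge0.
  rewrite -sumEFin.
  over.
rewrite ge0_integral_sum//; last first.
  move=> l x _; rewrite lee_fin; apply: mulr_ge0; first by apply: mulr_ge0 => //; apply: ind_ge0.
  by apply: prodr_ge0 => j _; rewrite subr_ge0.
  move=> l; apply/measurable_EFinP; apply: measurable_funM => //.
  by apply: measurable_funM => //; exact: measurable_indic.
rewrite -sumEFin; apply: eq_bigr => l _.
under eq_integral do rewrite mulrAC.
rewrite int_ind//; last first.
  by apply: mulr_ge0 => //; apply: prodr_ge0 => j _; rewrite subr_ge0.
by rewrite big_ord_recl /= -!mulrA [X in _ * X]mulrC.
Qed.

Lemma indE al be x : ind al be x = ((al < x < be)%R)%:R.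
Proof. by rewrite /ind indicE mem_setE in_itv. Qed.

Lemma prod_ind_cases k (al be : nat -> R) (t : seq R) :
  \prod_(j < k) ind (al j) (be j) (nth 0 t j) = 0 \/
  (\prod_(j < k) ind (al j) (be j) (nth 0 t j) = 1 /\
   forall j : 'I_k, al j < nth 0 t j < be j).
Proof.
case: (boolP [forall j : 'I_k, (al j < nth 0 t j < be j)]) => [/forallP H | /forallPn [j Hj]].
  by right; split => // ; apply: big1 => j _; rewrite indE H.
left.
by rewrite (bigD1 j)//= indE (negbTE Hj) mul0r.
Qed.

Lemma P2 (x y e : R) : 0 < x -> x <= y -> e <= 0 -> y `^ e <= x `^ e.
Proof.
move=> x0 xy e0; have y0 : 0 < y by exact: lt_le_trans xy.
rewrite -(opprK e) (powRN y) (powRN x) lef_pV2 ?posrE ?powR_gt0//.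
have := @ge0_ler_powR R (- e); rewrite oppr_ge0 => /(_ e0) H.
by apply: H => //; rewrite nnegrE ltW.
Qed.

Lemma P1 (v e : R) : 2^-1 <= v -> v <= 1 -> 2^-1 `^ `|e| <= v `^ e.
Proof.
move=> hv v1; have v0 : 0 < v by exact: lt_le_trans hv.
have [e0|e0] := leP 0 e.
  rewrite ger0_norm//; apply: (@ge0_ler_powR R e) => //; rewrite ?nnegrE// ?ltW; lra.
have h1 : (0:R) < 2^-1 by lra.
have h2 : (2^-1:R) <= 1 by lra.
have h : 0 < (2^-1:R) <= 1 by rewrite h1 h2.
have A : 2^-1 `^ `|e| <= 1.
  by apply: le_trans (ger_powR h (normr_ge0 e)) _; rewrite powRr0.
have h' : 0 < v <= 1 by rewrite v0 v1.
have B : 1 <= v `^ e by apply: le_trans (ger_powR h' (ltW e0)); rewrite powRr0.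
exact: le_trans A B.
Qed.

Lemma P3 (u e f : R) : 0 < u -> u <= 1 -> e <= f -> u `^ f <= u `^ e.
Proof. move=> u0 u1 ef; have h : 0 < u <= 1 by rewrite u0 u1.
exact: (ger_powR h ef). Qed.

Lemma case1_pt k (e : 'I_k -> R) (w s : R) (r : 'I_k -> R) (t : seq R) :
  0 < s -> w <= 0 -> (forall j, 0 <= r j) -> \sum_(j < k) r j = 1 - s ->
  (forall j : 'I_k, 1 - s < nth 0 t j < 1 - s / 2) ->
  (\prod_(j < k) (2^-1 `^ `|e j| * s `^ e j)) * (2 * s) `^ w <=
  (\prod_(j < k) (1 - nth 0 t j) `^ e j) * (1 - \sum_(j < k) nth 0 t j * r j) `^ w.
Proof.
move=> s0 w0 r0 rs ht.
apply: ler_pM.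
- by apply: prodr_ge0 => j _; apply: mulr_ge0; apply: powR_ge0.
- exact: powR_ge0.
- apply: ler_prod => j _; apply/andP; split.
    by apply: mulr_ge0; apply: powR_ge0.
  have /andP[h1 h2] := ht j.
  have -> : 1 - nth 0 t j = s * ((1 - nth 0 t j) / s) by field; exact: lt0r_neq0.
  rewrite powRM ?(ltW s0)//; last first.
    by apply: divr_ge0; [lra | exact: ltW].
  rewrite mulrC; apply: ler_wpM2l; first exact: powR_ge0.
  apply: P1.
    by rewrite ler_pdivlMr//; lra.
  by rewrite ler_pdivrMr//; lra.
- have -> : \sum_(j < k) nth 0 t j * r j =
     \sum_(j < k) r j - \sum_(j < k) (1 - nth 0 t j) * r j.
    by rewrite -sumrB; apply: eq_bigr => j _; ring.
  set S := \sum_(j < k) (1 - nth 0 t j) * r j.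
  have S0 : 0 <= S.
    apply: sumr_ge0 => j _; apply: mulr_ge0 => //.
    by have /andP[h1 h2] := ht j; lra.
  have S1 : S <= s * (1 - s).
    rewrite -rs mulr_sumr; apply: ler_sum => j _; apply: ler_wpM2r => //.
    by have /andP[h1 h2] := ht j; lra.
  apply: P2 => //; rewrite rs; nra.
Qed.

Definition hh (l : nat) : R := (2^-1) ^+ l.

Lemma hh_gt0 l : 0 < hh l.
Proof. by rewrite /hh exprn_gt0// invr_gt0. Qed.

Lemma hh_le1 l : hh l <= 1.
Proof. by rewrite /hh exprn_ile1// ?invr_ge0 ?invf_le1// ler1n. Qed.

Lemma hhS l : hh l.+1 = hh l / 2.
Proof. by rewrite /hh exprSr. Qed.

Lemma hhV l : (hh l)^-1 = 2 ^+ l.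
Proof. by rewrite /hh exprVn invrK. Qed.

Lemma case2_pt k (i : 'I_k) (e : 'I_k -> R) (w : R) (r : 'I_k -> R) (t : seq R) l :
  w <= 0 -> e i + w <= -1 -> (forall j, 0 <= r j) -> \sum_(j < k) r j < 1 ->
  1 - r i <= hh l.+1 ->
  (forall j : 'I_k, (if j == i then 1 - hh l else 0) < nth 0 t j <
                    (if j == i then 1 - hh l.+1 else 2^-1)) ->
  2 `^ w * 2 ^+ l * \prod_(j < k) (2^-1 `^ `|e j|) <=
  (\prod_(j < k) (1 - nth 0 t j) `^ e j) * (1 - \sum_(j < k) nth 0 t j * r j) `^ w.
Proof.
move=> w0 ew r0 rs1 ri ht.
have hl0 := hh_gt0 l; have hl1 := hh_le1 l; have hS := hhS l.
have /andP[ti1 ti2] : 1 - hh l < nth 0 t i < 1 - hh l.+1 by have := ht i; rewrite eqxx.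
have htj j : j != i -> 0 < nth 0 t j < 2^-1 by move=> /negbTE ji; have := ht j; rewrite ji.
have sumi : \sum_(j < k) r j = r i + \sum_(j < k | j != i) r j by rewrite (bigD1 i).
have sumi0 : 0 <= \sum_(j < k | j != i) r j by apply: sumr_ge0.
rewrite (bigD1 i)//= [\prod_(j < k) (1 - _) `^ _](bigD1 i)//=.
have E1 : forall x y c P : R, x * y * (c * P) = (x * y * c) * P by move=> *; ring.
have E2 : forall A P B : R, A * P * B = (A * B) * P by move=> *; ring.
rewrite E1 [X in _ <= X]E2.
apply: ler_pM.
- by rewrite !mulr_ge0 ?powR_ge0 ?exprn_ge0.
- by apply: prodr_ge0 => j _; apply: powR_ge0.
- set u := 1 - nth 0 t i.
  have u0 : 0 < u by rewrite /u; lra.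
  have u1 : u <= hh l by rewrite /u; lra.
  have uS : hh l.+1 < u by rewrite /u; lra.
  set D := 1 - \sum_(j < k) nth 0 t j * r j.
  have D0 : 0 < D.
    rewrite /D subr_gt0; apply: le_lt_trans rs1; apply: ler_sum => j _.
    rewrite ler_piMl//; have [->|ji] := eqVneq j i; first lra.
    by have /andP[? ?] := htj j ji; lra.
  have D2 : D <= 2 * u.
    rewrite /D (bigD1 i)//=.
    have : 0 <= \sum_(j < k | j != i) nth 0 t j * r j.
      apply: sumr_ge0 => j ji; apply: mulr_ge0 => //.
      by have /andP[? ?] := htj j ji; lra.
    have ri1 : r i <= 1 by lra.
    have : 0 <= r i := r0 i.
    rewrite /u in u1 uS *; nra.
  have B : (2 * u) `^ w <= D `^ w by apply: P2.
  rewrite powRM ?(ltW u0)// in B.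
  have x1 : (2:R) ^+ l <= u `^ (-1).
    rewrite powR_inv1 ?(ltW u0)// -hhV lef_pV2 ?posrE//.
  have x2 : u `^ (-1) <= u `^ (e i + w) by apply: P3 => //; lra.
  have x3 : u `^ (e i + w) = u `^ e i * u `^ w.
    by rewrite powRD// (gt_eqF u0) implybT.
  have x4 : (2:R) `^ w * 2 ^+ l * 2^-1 `^ `|e i| <= 2 `^ w * 2 ^+ l.
    rewrite ler_piMr ?mulr_ge0 ?powR_ge0 ?exprn_ge0//.
    have h : 0 < (2^-1:R) <= 1 by apply/andP; split; lra.
    by apply: le_trans (ger_powR h (normr_ge0 (e i))) _; rewrite powRr0.
  apply: le_trans x4 _.
  apply: (@le_trans _ _ (2 `^ w * (u `^ e i * u `^ w))).
    by rewrite -x3; apply: ler_wpM2l; [apply: powR_ge0 | exact: le_trans x1 x2].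
  rewrite mulrCA; apply: ler_wpM2l; first exact: powR_ge0.
  exact: B.
- apply: ler_prod => j ji; rewrite powR_ge0/=.
  have /andP[? ?] := htj j ji; apply: P1; lra.
Qed.

Definition inbox k (al be : nat -> R) (t : seq R) := forall j : 'I_k, al j < nth 0 t j < be j.

Lemma boxsum_le N k (c : nat -> R) (al be : nat -> nat -> R) (F : R) (t : seq R) :
  (forall l, 0 <= c l) -> 0 <= F ->
  (forall l l' : 'I_N, inbox k (al l) (be l) t -> inbox k (al l') (be l') t -> l = l') ->
  (forall l : 'I_N, inbox k (al l) (be l) t -> c l <= F) ->
  boxsum N k c al be t <= F.
Proof.
move=> c0 F0 dis hc; rewrite /boxsum.
case: (pselect (exists l : 'I_N, inbox k (al l) (be l) t)) => [[l0 H0]|H].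
  rewrite (bigD1 l0)//=.
  have -> : \sum_(l < N | l != l0) c l * \prod_(j < k) ind (al l j) (be l j) (nth 0 t j) = 0.
    apply: big1 => l' nl'; case: (prod_ind_cases k (al l') (be l') t) => [->|[_ H']];
      first by rewrite mulr0.
    by have := dis _ _ H0 H'; move/eqP: nl' => /[swap] ->.
  have -> : \prod_(j < k) ind (al l0 j) (be l0 j) (nth 0 t j) = 1.
    by apply: big1 => j _; rewrite indE H0.
  by rewrite mulr1 addr0 hc.
rewrite big1// => l _; case: (prod_ind_cases k (al l) (be l) t) => [->|[_ H']];
  first by rewrite mulr0.
by exfalso; apply: H; exists l.
Qed.

Lemma bf_ge0 n k (a : R) (p : 'I_k -> nat) (r : 'I_k -> R) t :
  0 <= bf_integrand n a p r t.
Proof.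
rewrite /bf_integrand; apply: mulr_ge0; last exact: powR_ge0.
by apply: prodr_ge0 => j _; exact: powR_ge0.
Qed.

Lemma BF_ge n k (a : R) (p : 'I_k -> nat) (r : 'I_k -> R) N (c : nat -> R)
    (al be : nat -> nat -> R) :
  2 < a -> (forall l, 0 <= c l) -> (forall l j, 0 <= al l j) ->
  (forall l j, al l j <= be l j) -> (forall l j, be l j <= 1) ->
  (forall t, boxsum N k c al be t <= bf_integrand n a p r t) ->
  (((((a - 2) / 2) ^+ k) * (\sum_(l < N) c l * \prod_(j < k) (be l j - al l j)))%:E
    <= BF n a p r)%E.
Proof.
move=> a2 c0 a0 ab b1 hb; rewrite /BF EFinM -iter_boxsum//.
apply: lee_wpmul2l.
  by rewrite lee_fin; apply: exprn_ge0; apply: divr_ge0; lra.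
apply: iter_mono => t; rewrite lee_fin//.
apply: sumr_ge0 => l _; apply: mulr_ge0 => //.
by apply: prodr_ge0 => j _; exact: ind_ge0.
Qed.

Lemma prod_const_ord (x : R) k : \prod_(i < k) x = x ^+ k.
Proof. by rewrite big_const_ord; elim: k => //= k ->; rewrite exprS. Qed.

Lemma case1_bound n k (a : R) (p : 'I_k -> nat) (r : 'I_k -> R) (s : R) :
  2 < a -> (- (n%:R - 1) / 2 : R) <= 0 -> (forall j, 0 <= r j) -> \sum_(j < k) r j < 1 ->
  s = 1 - \sum_(j < k) r j ->
  (((((a - 2) / 2) ^+ k) *
    ((\prod_(j < k) (2^-1 `^ `|(a + (p j)%:R) / 2 - 2| * s `^ ((a + (p j)%:R) / 2 - 2)))
     * (2 * s) `^ (- (n%:R - 1) / 2) * (s / 2) ^+ k))%:E <= BF n a p r)%E.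
Proof.
move=> a2 w0 r0 rs1 hs.
have s0 : 0 < s by rewrite hs subr_gt0.
have s1 : s <= 1 by rewrite hs lerBlDr lerDl; apply: sumr_ge0.
set c1 := _ * _ `^ _.
have := @BF_ge n k a p r 1 (fun _ => c1) (fun _ _ => 1 - s) (fun _ _ => 1 - s / 2) a2.
rewrite big_ord1 (eq_bigr (fun _ => s / 2)); last by move=> j _; lra.
rewrite prod_const_ord; apply.
- move=> _; rewrite /c1; apply: mulr_ge0; last exact: powR_ge0.
  by apply: prodr_ge0 => j _; apply: mulr_ge0; apply: powR_ge0.
- by move=> *; lra.
- by move=> *; lra.
- by move=> *; lra.
- move=> t; apply: boxsum_le.
  + move=> _; rewrite /c1; apply: mulr_ge0; last exact: powR_ge0.
    by apply: prodr_ge0 => j _; apply: mulr_ge0; apply: powR_ge0.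
  + exact: bf_ge0.
  + by move=> l l' _ _; rewrite (ord1 l) (ord1 l').
  + move=> l hb; rewrite /bf_integrand /c1; apply: case1_pt => //.
    by rewrite hs opprB addrC subrK.
Qed.

Lemma prod_powR k (s : R) (e : 'I_k -> R) : 0 < s ->
  \prod_(j < k) s `^ e j = s `^ (\sum_(j < k) e j).
Proof.
move=> s0; apply: (big_rec2 (fun x y => x = s `^ y)); first by rewrite powRr0.
by move=> j x y _ ->; rewrite powRD ?(gt_eqF s0) ?implybT.
Qed.

Lemma case1_alg k (e : 'I_k -> R) (w s : R) : 0 < s ->
  (\prod_(j < k) (2^-1 `^ `|e j| * s `^ e j)) * (2 * s) `^ w * (s / 2) ^+ k =
  ((\prod_(j < k) 2^-1 `^ `|e j|) * 2 `^ w * (2^-1) ^+ k) *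
    s `^ (\sum_(j < k) e j + w + k%:R).
Proof.
move=> s0; rewrite big_split /= (@prod_powR k s)// powRM ?(ltW s0)//.
rewrite exprMn -powR_mulrn ?(ltW s0)//.
rewrite !powRD ?(gt_eqF s0) ?implybT//.
ring.
Qed.

Lemma blowup (K E : R) (s : nat -> R) : 0 < K -> E < 0 -> (forall m, 0 < s m) ->
  s m @[m --> \oo] --> 0 -> forall A, \forall m \near \oo, A <= K * s m `^ E.
Proof.
move=> K0 E0 s0 hs A.
set B := Num.max A 1.
have B0 : 0 < B by rewrite lt_max ltr01 orbT.
have BK : 0 < B / K by rewrite divr_gt0.
set th := (B / K) `^ E^-1.
have th0 : 0 < th by rewrite powR_gt0.
move: hs => /cvgrPdist_lt /(_ th th0); apply: filterS => m hm.
have hm' : s m <= th.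
  by move: hm; rewrite sub0r normrN ger0_norm; [exact: ltW | exact: ltW (s0 m)].
have : th `^ E <= s m `^ E by apply: P2; [exact: s0 | exact: hm' | exact: ltW].
rewrite /th -powRrM mulVf ?ltr0_neq0// powRr1; last exact: ltW.
move=> h; apply: (@le_trans _ _ B); first by rewrite le_max lexx.
by rewrite -ler_pdivrMl// mulrC; exact: h.
Qed.

Lemma hh_anti m m' : (m <= m')%N -> hh m' <= hh m.
Proof. by move=> h; apply: ler_wiXn2l => //; lra. Qed.

Lemma sum_const_ord (x : R) N : \sum_(i < N) x = N%:R * x.
Proof. by rewrite big_const_ord; elim: N => [|N /= ->]; rewrite ?mul0r// mulrSr mulrDl mul1r addrC. Qed.

Lemma case2_bound n k (a : R) (p : 'I_k -> nat) (r : 'I_k -> R) (i : 'I_k) N :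
  2 < a -> (- (n%:R - 1) / 2 : R) <= 0 ->
  (a + (p i)%:R) / 2 - 2 + (- (n%:R - 1) / 2) <= -1 ->
  (forall j, 0 <= r j) -> \sum_(j < k) r j < 1 -> 1 - r i <= hh N ->
  (((((a - 2) / 2) ^+ k) *
    (N%:R * (2 `^ (- (n%:R - 1) / 2) *
       (\prod_(j < k) 2^-1 `^ `|(a + (p j)%:R) / 2 - 2|) *
       (\prod_(j < k | j != i) 2^-1) / 2)))%:E <= BF n a p r)%E.
Proof.
move=> a2 w0 ew r0 rs1 riN.
set C := \prod_(j < k) 2^-1 `^ `|(a + (p j)%:R) / 2 - 2|.
set Q := \prod_(j < k | j != i) (2^-1 : R).
set w := (- (n%:R - 1) / 2 : R).
have C0 : 0 <= C by apply: prodr_ge0 => j _; exact: powR_ge0.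
have := @BF_ge n k a p r N (fun l => 2 `^ w * 2 ^+ l * C)
  (fun l j => if j == val i then 1 - hh l else 0)
  (fun l j => if j == val i then 1 - hh l.+1 else 2^-1) a2.
have -> : \sum_(l < N) 2 `^ w * 2 ^+ l * C *
    \prod_(j < k) ((if nat_of_ord j == val i then 1 - hh l.+1 else 2^-1) -
                   (if nat_of_ord j == val i then 1 - hh l else 0)) =
    N%:R * (2 `^ w * C * Q / 2).
  rewrite -sum_const_ord; apply: eq_bigr => l _.
  rewrite (bigD1 i)//= eqxx.
  rewrite (eq_bigr (fun _ => 2^-1)); last first.
    by move=> j ji; have ji' : (val j == val i) = false := negbTE ji; rewrite ji' subr0.
  rewrite -/Q -hhV hhS; have := hh_gt0 l => hl0; field; exact: lt0r_neq0.
apply.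
- by move=> l; rewrite !mulr_ge0 ?powR_ge0 ?exprn_ge0.
- move=> l j; case: ifP => _ //; have := hh_le1 l; lra.
- move=> l j; case: ifP => _; last lra.
  by rewrite hhS; have := hh_gt0 l; lra.
- move=> l j; case: ifP => _; last lra.
  by have := hh_gt0 l.+1; lra.
move=> t; apply: boxsum_le.
- by move=> l; rewrite !mulr_ge0 ?powR_ge0 ?exprn_ge0.
- exact: bf_ge0.
- move=> l l' hb hb'; apply: ord_inj.
  have /andP[x1 x2] := hb i; have /andP[y1 y2] := hb' i.
  rewrite eqxx in x1 x2 y1 y2.
  case: (ltngtP l l') => // hll'.
    by have H := hh_anti _ _ hll'; clear hll'; exfalso; lra.
  by have H := hh_anti _ _ hll'; clear hll'; exfalso; lra.
- move=> l hb; rewrite /bf_integrand.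
  apply: (@case2_pt k i (fun j => (a + (p j)%:R) / 2 - 2) w) => //.
    by apply: le_trans riN _; apply: hh_anti.
Qed.
End aux.

Theorem theorem5p1 (R : realType) (n k : nat) (a : R) (p : 'I_k -> nat) :
  2 < a <= 4 ->
  (forall j, (0 < p j)%N) ->
  forall r : nat -> 'I_k -> R,
    (forall m j, 0 <= r m j) ->
    (forall m, \sum_(j < k) r m j < 1) ->
    ( ((\sum_(j < k) r m j) @[m --> \oo] --> (1%R : R)
        /\ k%:R * (a - 2) + (\sum_(j < k) p j)%:R + 1 < n%:R)
      \/
      (exists i : 'I_k, r m i @[m --> \oo] --> (1%R : R)
        /\ a + (p i)%:R - 1 <= n%:R) ) ->
    BF n a p (r m) @[m --> \oo] --> +oo%E.
Proof.
move=> /andP[a2 a4] p0 r r0 rs1 [[hs hn]|[i [hri hn]]].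
- have P0 : 0 <= (\sum_(j < k) p j)%:R :> R by [].
  have ka : 0 <= k%:R * (a - 2) :> R by apply: mulr_ge0 => //; lra.
  have w0 : (- (n%:R - 1) / 2 : R) <= 0 by lra.
  set e := fun j : 'I_k => (a + (p j)%:R) / 2 - 2.
  set w := (- (n%:R - 1) / 2 : R).
  set K := ((a - 2) / 2) ^+ k *
    ((\prod_(j < k) 2^-1 `^ `|e j|) * 2 `^ w * (2^-1) ^+ k).
  set E := \sum_(j < k) e j + w + k%:R.
  have K0 : 0 < K.
    apply: mulr_gt0; first by apply: exprn_gt0; lra.
    apply: mulr_gt0; last by apply: exprn_gt0; lra.
    apply: mulr_gt0; last exact: powR_gt0.
    by apply: prodr_gt0 => j _; apply: powR_gt0; lra.
  have sumE : \sum_(j < k) e j = (k%:R * a + (\sum_(j < k) p j)%:R) / 2 - 2 * k%:R.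
    rewrite /e sumrB -mulr_suml big_split /= natr_sum !sum_const_ord; ring.
  have E0 : E < 0 by rewrite /E sumE /w; nra.
  have s0 m : 0 < 1 - \sum_(j < k) r m j by rewrite subr_gt0.
  have hs' : (1 - \sum_(j < k) r m j) @[m --> \oo] --> (0 : R).
    by have := cvgB (cvg_cst (1:R)) hs; rewrite subrr; apply; exact: eventually_filter.
  apply/cvgeyPge => A.
  have := @blowup R K E _ K0 E0 s0 hs' A; apply: filterS => m hm.
  apply: le_trans _ (@case1_bound R n k a p (r m) _ a2 w0 (r0 m) (rs1 m) erefl).
  rewrite lee_fin; apply: le_trans hm _.
  by rewrite (@case1_alg R k e w) // /K !mulrA.
- have pi0 : 0 <= (p i)%:R :> R by [].
  have w0 : (- (n%:R - 1) / 2 : R) <= 0 by lra.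
  have ew : (a + (p i)%:R) / 2 - 2 + (- (n%:R - 1) / 2) <= -1 by lra.
  set C := \prod_(j < k) 2^-1 `^ `|(a + (p j)%:R) / 2 - 2|.
  set Q := \prod_(j < k | j != i) (2^-1 : R).
  set w := (- (n%:R - 1) / 2 : R).
  set K2 := ((a - 2) / 2) ^+ k * (2 `^ w * C * Q / 2).
  have K20 : 0 < K2.
    apply: mulr_gt0; first by apply: exprn_gt0; lra.
    apply: mulr_gt0; last lra.
    apply: mulr_gt0; last by apply: prodr_gt0 => j _; lra.
    apply: mulr_gt0; first exact: powR_gt0.
    by apply: prodr_gt0 => j _; apply: powR_gt0; lra.
  apply/cvgeyPge => A.
  set N := Num.Def.archi_bound (Num.max A 0 / K2).
  have hN : Num.max A 0 / K2 < N%:R.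
    by apply: archi_boundP; apply: divr_ge0; [rewrite le_max lexx orbT | exact: ltW].
  have := (cvgrPdist_lt _ _).1 hri (@hh R N) (@hh_gt0 R N).
  move=> /(_ eventually_filter); apply: filterS => m hm.
  have hm' : 1 - r m i <= @hh R N by apply: le_trans (ler_norm _) (ltW hm).
  apply: le_trans _ (@case2_bound R n k a p (r m) i N a2 w0 ew (r0 m) (rs1 m) hm').
  rewrite lee_fin -/C -/Q -/w.
  have -> : ((a - 2) / 2) ^+ k * (N%:R * (2 `^ w * C * Q / 2)) = N%:R * K2.
    by rewrite /K2; ring.
  rewrite ltr_pdivrMr// in hN.
  by apply: le_trans (ltW hN); rewrite le_max lexx.
Qed.
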